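(* For every positive integer $n$, \[ \overline{M}(n)=\sum_{d\mid n}\varphi(d)\sum_{\substack{\delta\mid n\\ \gcd(\delta,d)=1}}\mu(\delta)\sum_{\substack{1\le j\le n/\delta\\ \delta j\equiv 1 \ (\mathrm{mod}\ d)}} f\!\left(\left\lfloor \frac{n}{j\delta}\right\rfloor\right), \] where $d$ and $\delta$ run over the positive divisors of $n$, and for $d=1$ the congruence condition is vacuous.
   Context: For a nonempty finite set $A$ of positive integers, $(A)$ denotes the greatest common divisor of the elements of $A$. $\varphi$ is Euler's totient function and $\mu$ is the Möbius function. For $m\in\mathbb{N}$, $f(m)$ is the number of nonempty subsets $A\subseteq\{1,2,\ldots,m\}$ with $(A)=1$ (equivalently $f(m)=\sum_{d=1}^m\mu(d)(2^{\lfloor m/d\rfloor}-1)$). Define \[ \overline{M}(n)=\sum_{\substack{\emptyset\ne A\subseteq\{1,\ldots,n\}\\ \gcd((A),n)=1}}\gcd((A)-1,n), \] the sum over all nonempty subsets $A$ of $\{1,\ldots,n\}$ with $\gcd((A),n)=1$, with the convention $\gcd(0,n)=n$. *)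

(* Defs.v *)
From mathcomp Require Import all_boot all_order all_algebra.
Set Implicit Arguments. Unset Strict Implicit. Unset Printing Implicit Defensive.
Import GRing.Theory Num.Theory.
Local Open Scope ring_scope.

(* Moebius function, as an integer: 0 if n = 0 (unused) or n not squarefree,
   otherwise (-1)^(number of prime factors). *)
Definition mobius (n : nat) : int :=
  if (0 < n)%N && all (fun p => logn p n == 1%N) (primes n)
  then (-1) ^+ size (primes n) else 0.

(* gcd (A) of the set {i+1 | i in A} for A a subset of 'I_m, i.e. of {1..m}. *)
Definition setgcd (m : nat) (A : {set 'I_m}) : nat :=
  \big[gcdn/0%N]_(i in A) i.+1.

Definition f (m : nat) : nat :=
  #|[set A : {set 'I_m} | (A != set0) && (setgcd A == 1%N)]|.

(* Mbar(n) = sum over nonempty A subset of {1..n} with gcd((A),n)=1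
   of gcd((A)-1, n), with gcd(0,n) = n (which is gcdn's behaviour). *)
Definition Mbar (n : nat) : nat :=
  \sum_(A : {set 'I_n} | (A != set0) && coprime (setgcd A) n)
     gcdn (setgcd A).-1 n.

(* Main.v *)
Require Import Defs.
From mathcomp Require Import all_boot all_order all_algebra all_fingroup all_solvable zify.
Set Implicit Arguments. Unset Strict Implicit. Unset Printing Implicit Defensive.
Import GRing.Theory Num.Theory.
Local Open Scope ring_scope.

Lemma mob_sq p d : prime p -> (0 < d)%N -> (p ^ 2 %| d)%N -> mobius d = 0.
Proof.
move=> pp d0 hd; rewrite /mobius; case: ifP => // /andP [_ /allP H].
have pd : (p %| d)%N by apply: dvdn_trans hd; rewrite expnS dvdn_mulr.
have : p \in primes d by rewrite mem_primes pp d0 pd.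
by move/H/eqP => hl; move: hd; rewrite pfactor_dvdn // hl.
Qed.

Lemma mobM p e : prime p -> (0 < e)%N -> ~~ (p %| e)%N ->
  mobius (p * e) = - mobius e.
Proof.
move=> pp e0 npe.
have pnot : p \notin primes e by rewrite mem_primes pp e0 (negbTE npe).
have Hp : perm_eq (primes (p * e)) (p :: primes e).
  apply: uniq_perm; first exact: primes_uniq.
    by rewrite /= pnot primes_uniq.
  by move=> q; rewrite primesM ?(prime_gt0 pp) // primes_prime // !in_cons in_nil orbF.
have cpe : coprime p e by rewrite prime_coprime.
rewrite /mobius muln_gt0 prime_gt0 // e0 /= (perm_all _ Hp) (perm_size Hp) /=.
rewrite (lognM _ (prime_gt0 pp) e0) logn_prime // eqxx logn_coprime // addn0 eqxx /=.
have -> : all (fun q => logn q (p * e) == 1%N) (primes e) =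
          all (fun q => logn q e == 1%N) (primes e).
  apply: eq_in_all => q qe; rewrite (lognM _ (prime_gt0 pp) e0) logn_prime //.
  have : q != p by apply: contraNneq pnot => <-.
  by move/negbTE => ->; rewrite add0n.
by case: ifP => _; rewrite ?oppr0 // exprS mulN1r.
Qed.

Lemma mob1 : mobius 1 = 1.
Proof. by rewrite /mobius. Qed.
Lemma div_filter n k : (0 < n)%N ->
  perm_eq [seq d <- divisors n | (d %| k)%N] (divisors (gcdn k n)).
Proof.
move=> n0; apply: uniq_perm; first exact/filter_uniq/divisors_uniq.
  exact: divisors_uniq.
move=> d; rewrite mem_filter -dvdn_divisors // -dvdn_divisors ?gcdn_gt0 ?n0 ?orbT //.
by rewrite dvdn_gcd.
Qed.

Lemma sum_div_totient N : (0 < N)%N -> (\sum_(d <- divisors N) totient d)%N = N.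
Proof.
move=> N0.
have H : perm_eq (divisors N) [seq d <- index_iota 0 N.+1 | (d %| N)%N].
  apply: uniq_perm; first exact: divisors_uniq.
    exact/filter_uniq/iota_uniq.
  move=> d; rewrite mem_filter mem_index_iota -dvdn_divisors //.
  case dN: (d %| N)%N => //=; by rewrite ltnS dvdn_leq.
by rewrite (perm_big _ H) big_filter big_mkord sum_totient_dvd.
Qed.

Lemma gcd_sum n k : (0 < n)%N ->
  gcdn k n = (\sum_(d <- divisors n | (d %| k)%N) totient d)%N.
Proof.
move=> n0; rewrite -big_filter (perm_big _ (div_filter k n0)) sum_div_totient //.
by rewrite gcdn_gt0 n0 orbT.
Qed.

Lemma mob_sum m : (0 < m)%N -> \sum_(d <- divisors m) mobius d = (m == 1%N)%:R.
Proof.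
move=> m0; case: (ltngtP m 1) => [|m1|->]; first by rewrite ltnNge m0.
  set p := pdiv m; have pp : prime p by apply: pdiv_prime.
  have pm : (p %| m)%N by apply: pdiv_dvd.
  set D := divisors m.
  rewrite (bigID (fun d => p %| d)%N) /= (bigID (fun d => p ^ 2 %| d)%N) /=.
  rewrite [X in X + _ + _]big1_seq ?add0r; last first.
    move=> d /andP [/andP [_ hd] dD]; apply: (mob_sq pp) => //.
    by move: dD; rewrite -dvdn_divisors // => /dvdn_gt0; apply.
  rewrite -big_filter.
  have Hp : perm_eq [seq d <- D | (p %| d)%N && ~~ (p ^ 2 %| d)%N]
                    (map (muln p) [seq e <- D | ~~ (p %| e)%N]).
    apply: uniq_perm; first exact/filter_uniq/divisors_uniq.
      rewrite map_inj_uniq; first exact/filter_uniq/divisors_uniq.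
      by move=> a b /eqP; rewrite eqn_pmul2l ?prime_gt0 // => /eqP.
    move=> x; apply/idP/idP.
      rewrite mem_filter -dvdn_divisors // => /andP [/andP [px npx] xm].
      apply/mapP; exists (x %/ p)%N.
        rewrite mem_filter -dvdn_divisors // (dvdn_trans (dvdn_div px) xm) andbT.
        by rewrite dvdn_divRL // mulnn.
      by rewrite mulnC divnK.
    case/mapP => e; rewrite mem_filter -dvdn_divisors // => /andP [npe em] ->.
    rewrite mem_filter -dvdn_divisors // dvdn_mulr // -mulnn dvdn_pmul2l ?prime_gt0 //.
    rewrite npe /= Gauss_dvd ?pm ?em // prime_coprime //.
  rewrite (perm_big _ Hp) big_map big_filter.
  rewrite -[X in _ + X]opprK -sumrN; apply/eqP; rewrite subr_eq0; apply/eqP.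
  rewrite big_seq_cond [RHS]big_seq_cond; apply: eq_bigr => e /andP [eD npe].
  rewrite mobM //; move: eD; rewrite -dvdn_divisors // => /dvdn_gt0; apply.
  exact: m0.

by rewrite (_ : divisors 1 = [:: 1%N]) // big_seq1 mob1.
Qed.
Section Count.
Variables (n g : nat).
Hypothesis g0 : (0 < g)%N.

Lemma hlt (i : 'I_(n %/ g)) : ((g * i.+1).-1 < n)%N.
Proof.
have h1 : (i.+1 <= n %/ g)%N := ltn_ord i.
have h2 : (i.+1 * g <= n)%N by rewrite -leq_divRL.
have h3 : (0 < g * i.+1)%N by rewrite muln_gt0 g0.
rewrite prednK // mulnC //.
Qed.

Definition hh (i : 'I_(n %/ g)) : 'I_n := Ordinal (hlt i).

Lemma hh_val i : (hh i).+1 = (g * i.+1)%N.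
Proof. by rewrite /= prednK // muln_gt0 g0. Qed.

Lemma hh_inj : injective hh.
Proof.
move=> i j /(congr1 (fun x : 'I_n => (x : nat).+1)); rewrite !hh_val => /eqP.
by rewrite eqn_pmul2l // eqSS => /eqP /val_inj.
Qed.

Lemma setgcd_im (B : {set 'I_(n %/ g)}) : setgcd (hh @: B) = (g * setgcd B)%N.
Proof.
rewrite /setgcd big_imset /=; last by move=> ? ? _ _; apply: hh_inj.
rewrite (eq_bigr (fun i : 'I_(n %/ g) => g * i.+1)%N); last by move=> i _; rewrite hh_val.
by rewrite (big_morph (muln g) (muln_gcdr g) (muln0 g)).
Qed.

Lemma dvd_setgcd (A : {set 'I_n}) x : x \in A -> (setgcd A %| x.+1)%N.
Proof. by move=> xA; rewrite /setgcd (bigD1 x) //= dvdn_gcdl. Qed.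

Lemma hh_range (A : {set 'I_n}) x : setgcd A = g -> x \in A -> exists i, hh i = x.
Proof.
move=> gA xA; have gx : (g %| x.+1)%N by rewrite -gA dvd_setgcd.
set k := (x.+1 %/ g)%N.
have kg : (k * g = x.+1)%N by rewrite divnK.
have k0 : (0 < k)%N by move: kg; case: (k) => //; rewrite mul0n.
have kl : (k.-1 < n %/ g)%N.
  by rewrite prednK // leq_divRL // kg ltn_ord.
exists (Ordinal kl); apply: val_inj => /=.
by rewrite prednK // mulnC kg.
Qed.

Lemma count_g :
  #|[set A : {set 'I_n} | (A != set0) && (setgcd A == g)]| = f (n %/ g).
Proof.
rewrite /f.
have E : [set A : {set 'I_n} | (A != set0) && (setgcd A == g)] =
  (fun B : {set 'I_(n %/ g)} => hh @: B) @: [set B : {set 'I_(n %/ g)} | (B != set0) && (setgcd B == 1%N)].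
  apply/setP => A; rewrite inE; apply/idP/imsetP.
    case/andP => nA /eqP gA.
    have AE : hh @: (hh @^-1: A) = A.
      apply/setP => x; apply/imsetP/idP.
        by case=> i; rewrite inE => hi ->.
      move=> xA; have [i hi] := hh_range gA xA.
      by exists i; rewrite // inE hi.
    exists (hh @^-1: A); last by rewrite AE.
    rewrite inE; apply/andP; split.
      by apply: contra nA => /eqP E0; rewrite -AE E0 imset0.
    have : g = (g * setgcd (hh @^-1: A))%N by rewrite -setgcd_im AE gA.
    by move/eqP; rewrite -{1}(muln1 g) eqn_pmul2l // eq_sym.
  by case=> B; rewrite inE => /andP [nB gB] ->; rewrite imset_eq0 nB setgcd_im (eqP gB) muln1 eqxx.
by rewrite E card_imset //; apply: imset_inj; apply: hh_inj.
Qed.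
End Count.
Lemma setgcd_bounds n (A : {set 'I_n}) : A != set0 -> (1 <= setgcd A < n.+1)%N.
Proof.
case/set0Pn => x xA; have d := dvd_setgcd xA.
have p0 : (0 < setgcd A)%N.
  by move: d; case: (setgcd A) => //; rewrite dvd0n.
by rewrite p0 /= ltnS (leq_trans (dvdn_leq _ d)) ?ltn_ord.
Qed.

Lemma Mbar_S1 n : (0 < n)%N ->
  Mbar n = (\sum_(g <- index_iota 1 n.+1)
              (coprime g n) * (gcdn g.-1 n * f (n %/ g)))%N.
Proof.
move=> n0; rewrite /Mbar.
set G := fun g => gcdn g.-1 n.
rewrite (eq_bigr (fun A => \sum_(g <- index_iota 1 n.+1) if g == setgcd A then G g else 0))%N; last first.
  move=> A /andP [nA _]; rewrite -big_mkcond -big_filter filter_pred1_uniq ?big_seq1 //.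
    exact: iota_uniq.
  by rewrite mem_index_iota setgcd_bounds.
rewrite exchange_big /=; apply: eq_big_seq => g; rewrite mem_index_iota => /andP [g1 _].
rewrite -big_mkcondr /=.
rewrite (eq_bigr (fun _ => G g)); last by move=> A /andP [_ /eqP ->].
rewrite sum_nat_cond_const mulnC [in RHS]mulnCA; congr (_ * _)%N.
case cg: (coprime g n) => /=.
  rewrite mul1n -count_g; last exact: g1.
  apply: eq_card => A; rewrite !inE; case E: (g == setgcd A); first by rewrite -(eqP E) cg eqxx !andbT.
  by rewrite [setgcd A == g]eq_sym E !andbF.
rewrite mul0n; apply/eqP; rewrite cards_eq0; apply/eqP/setP => A; rewrite !inE.
by case E: (g == setgcd A); rewrite ?andbF // -(eqP E) cg andbF.
Qed.
Lemma reindex n dl (P : pred nat) (F : nat -> int) : (0 < dl)%N ->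
  \sum_(1 <= j < (n %/ dl).+1 | P (dl * j)%N) F (j * dl)%N =
  \sum_(g <- index_iota 1 n.+1 | (dl %| g)%N && P g) F g.
Proof.
move=> d0.
rewrite (eq_bigr (fun j => F (dl * j)%N)); last by move=> j _; rewrite mulnC.
rewrite -big_map -big_filter_cond; apply: perm_big; apply: uniq_perm.
- rewrite map_inj_uniq ?iota_uniq //.
  by move=> a b /eqP; rewrite eqn_pmul2l // => /eqP.
- exact/filter_uniq/iota_uniq.
move=> x; apply/mapP/idP.
  case=> j; rewrite mem_index_iota => /andP [j1 jn] ->.
  rewrite mem_filter dvdn_mulr // mem_index_iota muln_gt0 d0 j1 /= ltnS.
  by rewrite mulnC -leq_divRL.
rewrite mem_filter mem_index_iota => /andP [dx /andP [x1 xn]].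
exists (x %/ dl)%N; last by rewrite mulnC divnK.
rewrite mem_index_iota divn_gt0 // (dvdn_leq x1 dx) /= ltnS leq_div2r //.
Qed.

Lemma mob_cop n g : (0 < n)%N ->
  \sum_(dl <- divisors n | (dl %| g)%N) mobius dl = (coprime g n)%:Z.
Proof.
move=> n0; rewrite -big_filter (perm_big _ (div_filter g n0)) mob_sum ?natz //.
by rewrite gcdn_gt0 n0 orbT.
Qed.

Lemma cong_dvd g d : (0 < g)%N -> (g == 1 %[mod d])%N = (d %| g.-1)%N.
Proof. by move=> g0; rewrite eqn_mod_dvd // subn1. Qed.
Theorem mainTheorem1 (n : nat) : (0 < n)%N ->
  (Mbar n)%:Z =
  \sum_(d <- divisors n) (totient d)%:Z *
    \sum_(delta <- divisors n | coprime delta d)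
       mobius delta *
       \sum_(1 <= j < (n %/ delta).+1 | (delta * j == 1 %[mod d])%N)
          (f (n %/ (j * delta)))%:Z.
Proof.
move=> n0.
set I := index_iota 1 n.+1.
have -> : (Mbar n)%:Z = \sum_(g <- I)
    (gcdn g.-1 n)%:Z * ((coprime g n)%:Z * (f (n %/ g))%:Z).
  rewrite Mbar_S1 // (big_morph Posz PoszD (erefl _)).
  by apply: eq_bigr => g _; rewrite !PoszM mulrCA.
have S1 : forall d, d \in divisors n ->
  \sum_(dl <- divisors n | coprime dl d) mobius dl *
     \sum_(1 <= j < (n %/ dl).+1 | (dl * j == 1 %[mod d])%N) (f (n %/ (j * dl)))%:Z
  = \sum_(g <- I | (g == 1 %[mod d])%N) (coprime g n)%:Z * (f (n %/ g))%:Z.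
  move=> d dD.
  transitivity (\sum_(dl <- divisors n) mobius dl *
      \sum_(g <- I | (dl %| g)%N && (g == 1 %[mod d])%N) (f (n %/ g))%:Z).
    rewrite big_mkcond; apply: eq_big_seq => dl dlD.
    have dl0 : (0 < dl)%N.
      by move: dlD; rewrite -dvdn_divisors // => /dvdn_gt0; apply.
    rewrite (reindex n (fun g => g == 1 %[mod d])%N (fun g => (f (n %/ g))%:Z) dl0).
    case: ifP => // ncop; rewrite big1_seq ?mulr0 // => g /andP [/andP [dg gm] _].
    move/negbT: ncop => /negP; case; apply: (coprime_dvdl dg).
    by rewrite -coprime_modl (eqP gm) coprime_modl coprime1n.
  rewrite (eq_bigr (fun dl => \sum_(g <- I) if (dl %| g)%N && (g == 1 %[mod d])%N
              then mobius dl * (f (n %/ g))%:Z else 0)); last first.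
    by move=> dl _; rewrite big_distrr big_mkcond.
  rewrite exchange_big [RHS]big_mkcond; apply: eq_bigr => g _.
  case: (g == 1 %[mod d])%N.
    rewrite (eq_bigr (fun dl => if (dl %| g)%N then mobius dl * (f (n %/ g))%:Z else 0));
      last by move=> dl _; rewrite andbT.
    by rewrite -big_mkcond -big_distrl /= mob_cop.
  by rewrite big1 // => dl _; rewrite andbF.
symmetry.
rewrite (eq_big_seq (fun d => (totient d)%:Z *
   \sum_(g <- I | (d %| g.-1)%N) (coprime g n)%:Z * (f (n %/ g))%:Z)); last first.
  move=> d dD; rewrite S1 //; congr (_ * _).
  rewrite big_seq_cond [RHS]big_seq_cond; apply: eq_bigl => g.
  case gI: (g \in I) => //=; rewrite cong_dvd //.
  by move: gI; rewrite mem_index_iota => /andP [].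
rewrite (eq_bigr (fun d => \sum_(g <- I) if (d %| g.-1)%N then
   (totient d)%:Z * ((coprime g n)%:Z * (f (n %/ g))%:Z) else 0)); last first.
  by move=> d _; rewrite big_distrr big_mkcond.
rewrite exchange_big; apply: eq_bigr => g _.
rewrite -big_mkcond -big_distrl /= (gcd_sum g.-1 n0).
by rewrite (big_morph Posz PoszD (erefl _)).
Qed.
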